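(* Let $$H(t)=\prod_p\left(1+\frac{p^{it}+p^{-it}-2}{(p^{1+it}-1)(p^{1-it}-1)}\right)$$ for real $t$, the product being over primes. Then for $|t|\le\frac12$, $$1-c_2t^2\le H(t)\le 1-c_2t^2+2.56\,t^4,$$ where $c_2=\sum_p\frac{(\log p)^2}{(p-1)^2}=1.385604\dots$. *)

(* Defs.v *)
From Stdlib Require Export Reals ZArith Znumtheory.
From Coquelicot Require Export Coquelicot.
Open Scope R_scope.

Definition is_primeb (n : nat) : bool :=
  if prime_dec (Z.of_nat n) then true else false.

(* complex power p^s := exp(s log p) for real p > 0 and complex s = a + i b,
   i.e. p^a (cos(b log p) + i sin(b log p)). *)
Definition cpow (p : R) (s : C) : C :=
  (Rpower p (fst s) * cos (snd s * ln p), Rpower p (fst s) * sin (snd s * ln p)).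

Definition Hfactor (t : R) (n : nat) : C :=
  let p := INR n in
  (RtoC 1 + (cpow p (0, t) + cpow p (0, Ropp t) - RtoC 2)
     / ((cpow p (1, t) - RtoC 1) * (cpow p (1, Ropp t) - RtoC 1)))%C.

Fixpoint Hpartial (t : R) (N : nat) : C :=
  match N with
  | O => RtoC 1
  | S m => (Hpartial t m * (if is_primeb (S m) then Hfactor t (S m) else RtoC 1))%C
  end.

Definition c2_term (n : nat) : R :=
  if is_primeb n then (ln (INR n))^2 / (INR n - 1)^2 else 0.

Definition c2 : R := Series c2_term.

(* Main.v *)
Require Import Defs.
From Stdlib Require Import Lra Lia Psatz.

Lemma mono_deriv (f df : R -> R) (a b : R) : a <= b ->
  (forall x, a <= x <= b -> is_derive f x (df x)) ->
  (forall x, a <= x <= b -> 0 <= df x) -> f a <= f b.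
Proof.
  intros Hab Hd Hp.
  destruct (MVT_gen f a b df) as [c [Hc Heq]].
  - intros x Hx. apply Hd. unfold Rmin, Rmax in Hx. destruct (Rle_dec a b); lra.
  - intros x Hx. apply continuity_pt_filterlim. apply (@ex_derive_continuous R_AbsRing R_NormedModule).
    eexists. apply Hd. unfold Rmin, Rmax in Hx. destruct (Rle_dec a b); lra.
  - unfold Rmin, Rmax in Hc. destruct (Rle_dec a b); [|lra].
    assert (0 <= df c * (b - a)) by (apply Rmult_le_pos; [apply Hp; lra| lra]). lra.
Qed.

Lemma exp_up2 (y : R) : 0 <= y -> exp (- y) <= 1 - y + y^2/2.
Proof.
  intros Hy.
  set (f := fun y => 1 - y + y^2/2 - exp (-y)).
  assert (f 0 <= f y).
  { apply (mono_deriv f (fun y => -1 + y + exp (-y))); auto.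
    - intros x _. unfold f. auto_derive; auto; field.
    - intros x _. pose proof (exp_ineq1_le (-x)). lra. }
  unfold f in H. rewrite Ropp_0, exp_0 in H. lra.
Qed.

Lemma exp_low3 (s : R) : 0 <= s -> 1 - s + s^2/2 - s^3/6 <= exp (- s).
Proof.
  intros Hs.
  set (f := fun y => exp (-y) - (1 - y + y^2/2 - y^3/6)).
  assert (f 0 <= f s).
  { apply (mono_deriv f (fun y => 1 - y + y^2/2 - exp (-y))); auto.
    - intros x _. unfold f. auto_derive; auto; field.
    - intros x Hx. pose proof (exp_up2 x ltac:(lra)). lra. }
  unfold f in H. rewrite Ropp_0, exp_0 in H. lra.
Qed.

Lemma one_minus_le_exp (a : R) : 0 <= a <= 1 -> 1 - a <= exp (- (a + a^2/2)).
Proof.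
  intros Ha. eapply Rle_trans; [|apply exp_low3; nra].
  assert (0 <= a^3 * (1/3 - a/8 - a^2/8 - a^3/48)).
  { apply Rmult_le_pos. apply pow_le; lra. nra. }
  nra.
Qed.

Definition Qz (z : R) := z + z^3/3 + z^5/5 + z^7/(7*(1-z^2)).

Lemma ln_atanh_up (z : R) : 0 <= z < 1 ->
  ln (1 + z) - ln (1 - z) <= 2 * Qz z.
Proof.
  intros Hz.
  set (f := fun z => 2 * Qz z - (ln (1 + z) - ln (1 - z))).
  assert (f 0 <= f z).
  { apply (mono_deriv f (fun z => 2 * (2 * z^8 / (7 * (1 - z^2)^2)))); [lra| |].
    - intros x Hx. unfold f, Qz. auto_derive.
      + repeat split; try lra. intro H. assert (x^2 < 1) by nra. lra.
      + assert (0 < 1 - x^2) by nra. field. repeat split; lra.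
    - intros x Hx. assert (0 < 1 - x^2) by nra.
      apply Rmult_le_pos; [lra|]. apply Rdiv_le_0_compat. assert (0 <= x^8) by (apply pow_le; lra). lra.
      nra. }
  unfold f, Qz in H. rewrite !Rplus_0_r, !Rminus_0_r, ln_1 in H.
  unfold Qz. replace ((0:R)^3) with 0 in H by ring. replace ((0:R)^5) with 0 in H by ring.
  replace ((0:R)^7) with 0 in H by ring. lra.
Qed.

Lemma ln_atanh_low (z : R) : 0 <= z < 1 ->
  2 * (z + z^3/3) <= ln (1 + z) - ln (1 - z).
Proof.
  intros Hz.
  set (f := fun z => (ln (1 + z) - ln (1 - z)) - 2 * (z + z^3/3)).
  assert (f 0 <= f z).
  { apply (mono_deriv f (fun z => 2 * z^4 / (1 - z^2))); [lra| |].
    - intros x Hx. unfold f. auto_derive.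
      + repeat split; lra.
      + assert (0 < 1 - x^2) by nra. field. repeat split; lra.
    - intros x Hx. assert (0 < 1 - x^2) by nra.
      apply Rdiv_le_0_compat. nra. nra. }
  unfold f in H. rewrite !Rplus_0_r, !Rminus_0_r, ln_1 in H. lra.
Qed.

Lemma sin_le_id (y : R) : 0 <= y -> - y <= sin y <= y.
Proof.
  intros Hy. split.
  - set (f := fun y => sin y + y).
    assert (f 0 <= f y).
    { apply (mono_deriv f (fun y => cos y + 1)); auto.
      - intros x _. unfold f. auto_derive; auto; ring.
      - intros x _. pose proof (COS_bound x). lra. }
    unfold f in H. rewrite sin_0 in H. lra.
  - set (f := fun y => y - sin y).
    assert (f 0 <= f y).
    { apply (mono_deriv f (fun y => 1 - cos y)); auto.
      - intros x _. unfold f. auto_derive; auto; ring.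
      - intros x _. pose proof (COS_bound x). lra. }
    unfold f in H. rewrite sin_0 in H. lra.
Qed.

Lemma sin_sq_le (y : R) : sin y ^ 2 <= y ^ 2.
Proof.
  destruct (Rle_dec 0 y).
  - pose proof (sin_le_id y r). nra.
  - pose proof (sin_le_id (-y) ltac:(lra)). rewrite sin_neg in H. nra.
Qed.

Lemma cos_low (y : R) : 1 - y^2/2 <= cos y.
Proof.
  replace y with (2 * (y/2)) at 2 by field. rewrite cos_2a_sin.
  pose proof (sin_sq_le (y/2)). nra.
Qed.

Lemma sin_low (y : R) : 0 <= y -> y - y^3/6 <= sin y.
Proof.
  intros Hy.
  set (f := fun y => sin y - (y - y^3/6)).
  assert (f 0 <= f y).
  { apply (mono_deriv f (fun y => cos y - 1 + y^2/2)); auto.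
    - intros x _. unfold f. auto_derive; auto; field.
    - intros x _. pose proof (cos_low x). lra. }
  unfold f in H. rewrite sin_0 in H. lra.
Qed.

Lemma sin_sq_low (w : R) : w^2 <= 3 -> (w - w^3/6)^2 <= sin w ^ 2.
Proof.
  intros Hw.
  destruct (Rle_dec 0 w).
  - pose proof (sin_low w r).
    assert (0 <= w - w^3/6) by nra. nra.
  - pose proof (sin_low (-w) ltac:(lra)). rewrite sin_neg in H.
    assert (0 <= -w - (-w)^3/6) by nra. nra.
Qed.

Lemma x_bounds (th : R) : 0 <= 2 * (1 - cos th) <= th^2 /\
  (th^2 <= 12 -> th^2 - th^4/12 <= 2 * (1 - cos th)).
Proof.
  assert (Hc : cos th = 1 - 2 * sin (th/2) * sin (th/2)).
  { rewrite <- cos_2a_sin. f_equal. field. }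
  rewrite Hc.
  pose proof (sin_sq_le (th/2)).
  split. split; nra.
  intros H12. pose proof (sin_sq_low (th/2) ltac:(nra)). nra.
Qed.

Lemma phi_low (A p x : R) : 0 < A -> 1 <= p -> 0 <= x ->
  let a := x / (A + p * x) in
  x / A - (p - 1/2) * (x/A)^2 <= a + a^2/2.
Proof.
  intros HA Hp Hx a.
  set (r := x / A). set (q := p * r).
  assert (Hr : 0 <= r) by (unfold r; apply Rdiv_le_0_compat; lra).
  assert (Hq : 0 <= q) by (unfold q; nra).
  assert (Ha : a = r / (1 + q)).
  { unfold a, q, r. field. split; nra. }
  rewrite Ha.
  assert (E : r / (1 + q) + (r / (1 + q))^2/2 - (r - (p - 1/2) * r^2) =
     r^2 * q * (p - 1 + (p - 1/2) * q) / (1 + q)^2).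
  { unfold q. field. nra. }
  assert (0 <= r^2 * q * (p - 1 + (p - 1/2) * q) / (1 + q)^2).
  { apply Rdiv_le_0_compat; [|nra].
    apply Rmult_le_pos; [apply Rmult_le_pos; nra| nra]. }
  lra.
Qed.

Lemma a_mono (A p x w : R) : 0 < A -> 0 <= p -> 0 <= w <= x ->
  w / (A + p * w) <= x / (A + p * x).
Proof.
  intros HA Hp [Hw1 Hw2].
  assert (0 < A + p*w) by nra. assert (0 < A + p*x) by nra.
  apply Rmult_le_reg_r with ((A + p*w) * (A + p*x)). nra.
  field_simplify; try nra.
Qed.

Lemma factor_low (A p th : R) : 1 <= A -> 1 <= p ->
  let x := 2 * (1 - cos th) in
  let a := x / (A + p * x) in
  th^2 / A - th^4 * (1/(12*A) + (p - 1/2)/A^2) <= a + a^2/2.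
Proof.
  intros HA Hp x a.
  destruct (x_bounds th) as [[Hx0 Hx1] Hx2].
  fold x in Hx0, Hx1, Hx2.
  assert (Ha0 : 0 <= a) by (unfold a; apply Rdiv_le_0_compat; nra).
  set (u := th^2).
  assert (Hu : 0 <= u) by (unfold u; nra).
  replace (th^4) with (u^2) by (unfold u; field).
  destruct (Rle_dec 12 u).
  - assert (u / A - u^2 * (1/(12*A) + (p - 1/2)/A^2) <= 0).
    { assert (u/A - u^2/(12*A) <= 0).
      { replace (u/A - u^2/(12*A)) with (u * (12 - u) / (12 * A)) by (field; lra).
        apply Rmult_le_0_r. nra. left. apply Rinv_0_lt_compat. lra. }
      assert (0 <= u^2 * ((p - 1/2)/A^2)).
      { apply Rmult_le_pos. nra. apply Rdiv_le_0_compat; nra. }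
      replace (u^2 * (1/(12*A) + (p - 1/2)/A^2)) with (u^2/(12*A) + u^2 * ((p-1/2)/A^2)) by (field; lra).
      lra. }
    nra.
  - set (w := u - u^2/12).
    assert (Hw : 0 <= w <= x).
    { unfold w. split. nra.
      replace (u - u^2/12) with (th^2 - th^4/12) by (unfold u; field).
      apply Hx2. unfold u in n. lra. }
    assert (Hw2 : w <= u) by (unfold w; nra).
    pose proof (phi_low A p w ltac:(lra) Hp (proj1 Hw)) as Hphi. simpl in Hphi.
    pose proof (a_mono A p x w ltac:(lra) ltac:(lra) Hw) as Hm. fold a in Hm.
    set (aw := w / (A + p * w)) in *.
    assert (0 <= aw) by (unfold aw; apply Rdiv_le_0_compat; nra).
    assert (aw + aw^2/2 <= a + a^2/2) by nra.
    assert ((w/A)^2 <= (u/A)^2).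
    { apply pow_incr. split. apply Rdiv_le_0_compat; lra.
      unfold Rdiv. apply Rmult_le_compat_r. left; apply Rinv_0_lt_compat; lra. lra. }
    assert ((p - 1/2) * (w/A)^2 <= (p - 1/2) * (u/A)^2) by (apply Rmult_le_compat_l; lra).
    replace (u / A - u^2 * (1/(12*A) + (p - 1/2)/A^2)) with (w/A - (p-1/2) * (u/A)^2)
      by (unfold w; field; lra).
    lra.
Qed.

Lemma factor_up (A p th : R) : 1 <= A -> 1 <= p ->
  let x := 2 * (1 - cos th) in
  let a := x / (A + p * x) in
  0 <= a <= 1 /\ a <= th^2 / A.
Proof.
  intros HA Hp x a.
  destruct (x_bounds th) as [[Hx0 Hx1] _]. fold x in Hx0, Hx1.
  split; [split|].
  - unfold a. apply Rdiv_le_0_compat; nra.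
  - unfold a. apply Rmult_le_reg_r with (A + p*x). nra.
    field_simplify; nra.
  - unfold a. apply Rle_trans with (x / A).
    + unfold Rdiv. apply Rmult_le_compat_l. lra.
      apply Rinv_le_contravar; nra.
    + unfold Rdiv. apply Rmult_le_compat_r. left; apply Rinv_0_lt_compat; lra. lra.
Qed.

Definition lp n := ln (INR n).
Definition Ap n := (INR n - 1)^2.
Definition xt t n := 2 * (1 - cos (t * lp n)).
Definition at_ t n := if is_primeb n then xt t n / (Ap n + INR n * xt t n) else 0.
Definition kterm n := if is_primeb n then lp n ^4 * (1/(12*Ap n) + (INR n - 1/2)/Ap n^2) else 0.

Lemma primeb_prime n : is_primeb n = true -> prime (Z.of_nat n).
Proof. unfold is_primeb. destruct (prime_dec (Z.of_nat n)); auto; discriminate. Qed.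

Lemma primeb_ge2 n : is_primeb n = true -> (2 <= n)%nat.
Proof. intros H. apply primeb_prime, prime_ge_2 in H. lia. Qed.

Lemma Hfactor_eq t n : is_primeb n = true -> Hfactor t n = (1 - at_ t n, 0).
Proof.
  intros Hp. pose proof (primeb_ge2 n Hp) as H2.
  assert (Hn : 2 <= INR n) by (apply (le_INR 2); auto).
  unfold at_; rewrite Hp. unfold Hfactor, cpow, xt, Ap, lp. simpl fst; simpl snd.
  rewrite Rpower_O, Rpower_1 by lra.
  set (c := cos (t * ln (INR n))). set (s := sin (t * ln (INR n))).
  replace (- t * ln (INR n)) with (- (t * ln (INR n))) by ring.
  rewrite cos_neg, sin_neg. fold c s.
  assert (Hcs : s^2 + c^2 = 1) by (pose proof (sin2_cos2 (t * ln (INR n))) as E; fold c s in E; unfold Rsqr in E; lra).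
  assert (Hc : c <= 1) by (unfold c; apply (COS_bound (t * ln (INR n)))).
  assert (HD : 0 < (INR n - 1)^2 + INR n * (2 * (1 - c))) by nra.
  unfold Cplus, Cminus, Cmult, Cdiv, Cinv, Copp, RtoC, Cplus; simpl.
  set (D := (INR n - 1)^2 + INR n * (2 * (1 - c))) in *.
  assert (E1 : (INR n * c + - (1)) * (INR n * c + - (1)) - (INR n * s + - 0) * (INR n * - s + - 0) = D).
  { assert (E : (INR n * c + - (1)) * (INR n * c + - (1)) - (INR n * s + - 0) * (INR n * - s + - 0) - D
        = INR n ^ 2 * (s^2 + c^2 - 1)) by (unfold D; ring).
    rewrite Hcs in E. lra. }
  assert (E2 : (INR n * c + - (1)) * (INR n * - s + - 0) + (INR n * s + - 0) * (INR n * c + - (1)) = 0) by ring.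
  rewrite E1, E2.
  replace ((INR n - 1) * ((INR n - 1) * 1) + INR n * (2 * (1 - c))) with D by (unfold D; ring).
  apply injective_projections; simpl; field; lra.
Qed.

Lemma primeb_0 : is_primeb 0 = false.
Proof. destruct (is_primeb 0) eqn:E; [apply primeb_ge2 in E; lia | reflexivity]. Qed.

Lemma at_props t n : (0 <= at_ t n <= 1 /\ at_ t n <= t^2 * c2_term n) /\
  t^2 * c2_term n - t^4 * kterm n <= at_ t n + at_ t n^2/2.
Proof.
  unfold at_, c2_term, kterm. destruct (is_primeb n) eqn:Hp.
  - pose proof (primeb_ge2 n Hp) as H2.
    assert (Hn : 2 <= INR n) by (apply (le_INR 2); auto).
    assert (HA : 1 <= Ap n) by (unfold Ap; nra).
    pose proof (factor_up (Ap n) (INR n) (t * lp n) HA ltac:(lra)) as [U1 U2].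
    pose proof (factor_low (Ap n) (INR n) (t * lp n) HA ltac:(lra)) as L.
    simpl in U1, U2, L. unfold xt.
    split; [split; auto|].
    + eapply Rle_trans; [apply U2|]. unfold Ap, lp. right. field. nra.
    + eapply Rle_trans; [|apply L]. unfold Ap, lp. right. field. nra.
  - split; [split|]; try lra; try (rewrite Rmult_0_r; lra); simpl; lra.
Qed.

Fixpoint Preal (t : R) (N : nat) : R :=
  match N with O => 1 | S m => Preal t m * (1 - at_ t (S m)) end.

Lemma Hpartial_eq t N : Hpartial t N = (Preal t N, 0).
Proof.
  induction N as [|m IH]; simpl; auto.
  rewrite IH. destruct (is_primeb (S m)) eqn:Hp.
  - rewrite Hfactor_eq by auto. unfold Cmult; simpl.
    apply injective_projections; simpl; ring.
  - unfold at_. rewrite Hp. unfold Cmult, RtoC; simpl.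
    apply injective_projections; simpl; ring.
Qed.

Lemma at_0 t : at_ t 0 = 0.
Proof. unfold at_. rewrite primeb_0. auto. Qed.

Lemma Preal_bounds t N : 0 <= Preal t N <= 1 /\ 1 - sum_f_R0 (at_ t) N <= Preal t N.
Proof.
  induction N as [|m IH]; simpl.
  - rewrite at_0. lra.
  - destruct (at_props t (S m)) as [[[A0 A1] _] _].
    assert (0 <= sum_f_R0 (at_ t) m).
    { clear IH A0 A1. induction m; simpl. rewrite at_0; lra.
      destruct (at_props t (S m)) as [[[B0 _] _] _]. lra. }
    destruct IH as [[P0 P1] P2].
    split; [split|]; nra.
Qed.

Lemma Preal_up t N : Preal t N <= exp (- sum_f_R0 (fun n => at_ t n + at_ t n^2/2) N).
Proof.
  induction N as [|m IH]; simpl.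
  - rewrite at_0. apply Rle_trans with (exp 0); [rewrite exp_0; lra | right; f_equal; field].
  - destruct (at_props t (S m)) as [[[A0 A1] _] _].
    destruct (Preal_bounds t m) as [[P0 P1] _].
    pose proof (one_minus_le_exp (at_ t (S m)) ltac:(lra)).
    rewrite Ropp_plus_distr, exp_plus.
    apply Rmult_le_compat; auto; lra.
Qed.

Lemma Preal_decr t N : Preal t (S N) <= Preal t N.
Proof.
  simpl. destruct (at_props t (S N)) as [[[A0 A1] _] _].
  destruct (Preal_bounds t N) as [[P0 P1] _]. nra.
Qed.

Lemma sum_le_gen (f g : nat -> R) N : (forall n, f n <= g n) -> sum_f_R0 f N <= sum_f_R0 g N.
Proof. intros H. induction N; simpl. apply H. specialize (H (S N)). lra. Qed.

Lemma sum_scal c (f : nat -> R) N : sum_f_R0 (fun n => c * f n) N = c * sum_f_R0 f N.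
Proof. induction N; simpl. auto. rewrite IHN. ring. Qed.

Lemma sum_minus (f g : nat -> R) N : sum_f_R0 (fun n => f n - g n) N = sum_f_R0 f N - sum_f_R0 g N.
Proof. induction N; simpl. auto. rewrite IHN. ring. Qed.

Open Scope Z_scope.
Fixpoint nodiv (fuel : nat) (m d : Z) : bool :=
  match fuel with O => true | S f =>
    if m <? d * d then true else if m mod d =? 0 then false else nodiv f m (d + 2) end.
Definition ptest (m : Z) : bool := (2 <=? m) && ((m =? 2) || (negb (m mod 2 =? 0) && nodiv 100 m 3)).
Definition cdiv (a b : Z) : Z := - ((- a) / b).
Definition Sc : Z := 2^32.
Definition QzU (zU : Z) : Z :=
  let z2U := cdiv (zU * zU) Sc in
  let z3U := cdiv (z2U * zU) Sc in
  let z5U := cdiv (z3U * z2U) Sc in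
  let z7U := cdiv (z5U * z2U) Sc in
  zU + cdiv z3U 3 + cdiv z5U 5 + cdiv (z7U * Sc) (7 * (Sc - z2U)).
Definition L2U : Z := 2 * QzU (cdiv Sc 3).
Definition lnU (m : Z) : Z :=
  let k := Z.log2 m in let pk := 2 ^ k in
  k * L2U + 2 * QzU (cdiv ((m - pk) * Sc) (m + pk)).
Definition Dz : Z := 100000000.
Definition both (m : Z) : Z * Z :=
  if ptest m then let L := lnU m in let A := (m-1)*(m-1) in
     (cdiv (L * L * Dz) (Sc * Sc * A), cdiv (L * L * L * L * (2 * A + 24 * m - 12) * Dz) (Sc * Sc * Sc * Sc * 24 * A * A)) else (0,0).
Definition c2z (m : Z) : Z := fst (both m).
Definition kz (m : Z) : Z := snd (both m).
Fixpoint sumP (N : nat) : Z * Z * Z :=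
  match N with O => (0, 0, 0) | S k => let '(a, b, m) := sumP k in let '(x, y) := both (m+1) in (a + x, b + y, m+1) end.
Close Scope Z_scope.

Lemma nodiv_sound m : prime m -> forall fuel d, (2 <= d)%Z -> nodiv fuel m d = true.
Proof.
  intros Hp fuel. pose proof (prime_ge_2 m Hp) as Hm.
  induction fuel as [|f IH]; intros d Hd; simpl; auto.
  destruct (m <? d * d)%Z eqn:E1; auto.
  apply Z.ltb_ge in E1.
  destruct (m mod d =? 0)%Z eqn:E2.
  - apply Z.eqb_eq in E2. apply Z.mod_divide in E2; [|lia].
    destruct (prime_divisors m Hp d E2) as [H|[H|[H|H]]]; try lia.
    subst. nia.
  - apply IH. lia.
Qed.

Lemma ptest_sound m : prime m -> ptest m = true.
Proof.
  intros Hp. pose proof (prime_ge_2 m Hp) as Hm. unfold ptest.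
  apply andb_true_intro; split; [apply Z.leb_le; lia|].
  destruct (m =? 2)%Z eqn:E; auto. rewrite Bool.orb_false_l.
  apply Z.eqb_neq in E.
  assert (H2 : (m mod 2 =? 0)%Z = false).
  { destruct (m mod 2 =? 0)%Z eqn:E2; auto. exfalso.
    apply Z.eqb_eq in E2. apply Z.mod_divide in E2; [|lia].
    destruct (prime_divisors m Hp 2 E2) as [H|[H|[H|H]]]; lia. }
  rewrite H2. cbn [negb]. rewrite Bool.andb_true_l.
  apply nodiv_sound; auto; lia.
Qed.

Lemma ptest_ge2 m : ptest m = true -> (2 <= m)%Z.
Proof. unfold ptest. intros H. apply andb_prop in H as [H _]. apply Z.leb_le in H. lia. Qed.

Lemma cdiv_ge a b : (0 < b)%Z -> IZR a / IZR b <= IZR (cdiv a b).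
Proof.
  intros Hb. unfold cdiv.
  pose proof (Z.div_mod (-a) b ltac:(lia)) as E.
  pose proof (Z.mod_pos_bound (-a) b Hb) as B.
  set (q := ((-a) / b)%Z) in *. set (r := ((-a) mod b)%Z) in *.
  assert (Ea : IZR a = - (IZR b * IZR q) - IZR r).
  { rewrite <- mult_IZR, <- opp_IZR, <- minus_IZR. f_equal. lia. }
  assert (0 <= IZR r) by (apply IZR_le; lia).
  assert (0 < IZR b) by (apply IZR_lt; lia).
  rewrite opp_IZR, Ea. apply Rmult_le_reg_r with (IZR b); auto.
  field_simplify; try lra; nra.
Qed.

Lemma cdiv_lt a b : (0 < b)%Z -> IZR (cdiv a b) < IZR a / IZR b + 1.
Proof.
  intros Hb. unfold cdiv.
  pose proof (Z.div_mod (-a) b ltac:(lia)) as E.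
  pose proof (Z.mod_pos_bound (-a) b Hb) as B.
  set (q := ((-a) / b)%Z) in *. set (r := ((-a) mod b)%Z) in *.
  assert (Ea : IZR a = - (IZR b * IZR q) - IZR r).
  { rewrite <- mult_IZR, <- opp_IZR, <- minus_IZR. f_equal. lia. }
  assert (IZR r < IZR b) by (apply IZR_lt; lia).
  assert (0 < IZR b) by (apply IZR_lt; lia).
  rewrite opp_IZR, Ea. apply Rmult_lt_reg_r with (IZR b); auto.
  field_simplify; try lra.
Qed.

Lemma Sc_pos : (0 < Sc)%Z.
Proof. unfold Sc. lia. Qed.

Lemma IZR_Sc : IZR Sc = 4294967296.
Proof. unfold Sc. simpl. reflexivity. Qed.

Lemma cdiv_geS a : IZR a / IZR Sc <= IZR (cdiv a Sc).
Proof. apply cdiv_ge, Sc_pos. Qed.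
Lemma cdiv_ltS a : IZR (cdiv a Sc) < IZR a / IZR Sc + 1.
Proof. apply cdiv_lt, Sc_pos. Qed.

Lemma QzU_correct (zU : Z) (z : R) : 0 <= z -> z <= IZR zU / IZR Sc ->
  IZR zU <= IZR Sc / 2 -> Qz z <= IZR (QzU zU) / IZR Sc.
Proof.
  intros Hz0 Hz1 Hz2. pose proof IZR_Sc as HS.
  unfold QzU.
  set (z2U := cdiv (zU * zU) Sc). set (z3U := cdiv (z2U * zU) Sc).
  set (z5U := cdiv (z3U * z2U) Sc). set (z7U := cdiv (z5U * z2U) Sc).
  set (S := IZR Sc) in *.
  set (Zr := IZR zU / S) in *.
  assert (HZr : 0 <= Zr <= 1/2). { split; [lra|]. unfold Zr. rewrite HS in *. apply Rmult_le_reg_r with 4294967296; [lra|]. field_simplify. lra. }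
  assert (H2a : Zr * Zr <= IZR z2U / S).
  { pose proof (cdiv_geS (zU * zU)). fold z2U S in H. rewrite mult_IZR in H.
    unfold Zr. rewrite HS in *. apply Rmult_le_reg_r with 4294967296; [lra|].
    field_simplify. field_simplify in H. lra. }
  assert (H2b : IZR z2U / S < Zr * Zr + 1/S).
  { pose proof (cdiv_ltS (zU * zU)). fold z2U S in H. rewrite mult_IZR in H.
    unfold Zr. rewrite HS in *. apply Rmult_lt_reg_r with 4294967296; [lra|].
    field_simplify. field_simplify in H. lra. }
  set (z2 := IZR z2U / S) in *.
  assert (Hz2b : 0 <= z2 < 1/2).
  { assert (0 <= Zr * Zr <= 1/4) by (split; [apply Rmult_le_pos|replace (1/4) with (1/2*(1/2)) by field; apply Rmult_le_compat]; lra).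
    split. lra. rewrite HS in *. lra. }
  assert (H3 : z2 * Zr <= IZR z3U / S).
  { pose proof (cdiv_geS (z2U * zU)). fold z3U S in H. rewrite mult_IZR in H.
    unfold z2, Zr. rewrite HS in *. apply Rmult_le_reg_r with 4294967296; [lra|].
    field_simplify. field_simplify in H. lra. }
  set (z3 := IZR z3U / S) in *.
  assert (H5 : z3 * z2 <= IZR z5U / S).
  { pose proof (cdiv_geS (z3U * z2U)). fold z5U S in H. rewrite mult_IZR in H.
    unfold z2, z3. rewrite HS in *. apply Rmult_le_reg_r with 4294967296; [lra|].
    field_simplify. field_simplify in H. lra. }
  set (z5 := IZR z5U / S) in *.
  assert (H7 : z5 * z2 <= IZR z7U / S).
  { pose proof (cdiv_geS (z5U * z2U)). fold z7U S in H. rewrite mult_IZR in H.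
    unfold z2, z5. rewrite HS in *. apply Rmult_le_reg_r with 4294967296; [lra|].
    field_simplify. field_simplify in H. lra. }
  set (z7 := IZR z7U / S) in *.
  assert (Hlt : (z2U < Sc)%Z).
  { apply lt_IZR. fold S. unfold z2 in Hz2b. rewrite HS in *.
    apply Rmult_lt_reg_r with (/4294967296); [lra|]. lra. }
  assert (Ht : z7 / (7 * (1 - z2)) <= IZR (cdiv (z7U * Sc) (7 * (Sc - z2U))) / S).
  { pose proof (cdiv_ge (z7U * Sc) (7 * (Sc - z2U)) ltac:(lia)) as H.
    rewrite !mult_IZR, minus_IZR in H. fold S in H.
    unfold z7, z2. rewrite HS in *.
    assert (0 < 4294967296 - IZR z2U) by (apply Rlt_Rminus; rewrite <- HS; apply IZR_lt; auto).
    eapply Rle_trans; [|apply Rmult_le_compat_r; [|exact H]]; [|lra].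
    right. field. lra. }
  assert (Hc3 : z3 / 3 <= IZR (cdiv z3U 3) / S).
  { pose proof (cdiv_ge z3U 3 ltac:(lia)).
    replace (z3 / 3) with ((IZR z3U / 3) / S) by (unfold z3; field; rewrite HS; lra).
    unfold Rdiv at 1 3. apply Rmult_le_compat_r; [left; apply Rinv_0_lt_compat; rewrite HS; lra|]. auto. }
  assert (Hc5 : z5 / 5 <= IZR (cdiv z5U 5) / S).
  { pose proof (cdiv_ge z5U 5 ltac:(lia)).
    replace (z5 / 5) with ((IZR z5U / 5) / S) by (unfold z5; field; rewrite HS; lra).
    unfold Rdiv at 1 3. apply Rmult_le_compat_r; [left; apply Rinv_0_lt_compat; rewrite HS; lra|]. auto. }
  assert (Zr2 : z^2 <= z2).
  { apply Rle_trans with (Zr * Zr); auto. simpl. rewrite Rmult_1_r.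
    apply Rmult_le_compat; lra. }
  assert (Zr3 : z^3 <= z3).
  { apply Rle_trans with (z2 * Zr); auto. replace (z^3) with (z^2 * z) by ring.
    apply Rmult_le_compat; try lra. apply pow_le; lra. }
  assert (Zr5 : z^5 <= z5).
  { apply Rle_trans with (z3 * z2); auto. replace (z^5) with (z^3 * z^2) by ring.
    apply Rmult_le_compat; auto; apply pow_le; lra. }
  assert (Zr7 : z^7 <= z7).
  { apply Rle_trans with (z5 * z2); auto. replace (z^7) with (z^5 * z^2) by ring.
    apply Rmult_le_compat; auto; apply pow_le; lra. }
  assert (Zt : z^7 / (7 * (1 - z^2)) <= z7 / (7 * (1 - z2))).
  { unfold Rdiv. apply Rmult_le_compat. apply pow_le; lra.
    left; apply Rinv_0_lt_compat; lra. auto.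
    apply Rinv_le_contravar; lra. }
  unfold Qz. rewrite !plus_IZR.
  replace ((IZR zU + IZR (cdiv z3U 3) + IZR (cdiv z5U 5) + IZR (cdiv (z7U * Sc) (7 * (Sc - z2U)))) / S)
    with (Zr + IZR (cdiv z3U 3) / S + IZR (cdiv z5U 5) / S + IZR (cdiv (z7U * Sc) (7 * (Sc - z2U))) / S)
    by (unfold Zr; field; rewrite HS; lra).
  lra.
Qed.

Lemma ln2_eq : ln 2 = ln (1 + 1/3) - ln (1 - 1/3).
Proof. rewrite <- ln_div by lra. f_equal. field. Qed.

Lemma QzU_at (num den : Z) (z : R) : (0 < den)%Z -> (0 <= num)%Z ->
  z = IZR num / IZR den -> IZR num / IZR den + 1 / IZR Sc <= 1/2 ->
  Qz z <= IZR (QzU (cdiv (num * Sc) den)) / IZR Sc.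
Proof.
  intros Hd Hn Hz H3. pose proof IZR_Sc as HS.
  assert (0 < IZR den) by (apply IZR_lt; auto).
  assert (0 <= IZR num) by (apply IZR_le; auto).
  pose proof (cdiv_ge (num * Sc) den Hd) as G. pose proof (cdiv_lt (num * Sc) den Hd) as L.
  rewrite mult_IZR in G, L.
  apply QzU_correct.
  - rewrite Hz. apply Rdiv_le_0_compat; lra.
  - rewrite Hz. rewrite HS in *. apply Rmult_le_reg_r with 4294967296; [lra|].
    field_simplify; [|lra]. unfold Rdiv in G |- *. lra.
  - rewrite HS in *. eapply Rle_trans; [left; exact L|].
    replace (IZR num * 4294967296 / IZR den) with (IZR num / IZR den * 4294967296) by (field; lra).
    lra.
Qed.

Lemma ln2_le : ln 2 <= IZR L2U / IZR Sc.
Proof.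
  rewrite ln2_eq. unfold L2U. rewrite mult_IZR.
  eapply Rle_trans; [apply ln_atanh_up; lra|].
  pose proof (QzU_at 1 3 (1/3) ltac:(lia) ltac:(lia) ltac:(field) ltac:(rewrite IZR_Sc; lra)).
  rewrite Z.mul_1_l in H. unfold Rdiv in *. lra.
Qed.

Lemma ln2_ge : 56/81 <= ln 2.
Proof.
  rewrite ln2_eq. eapply Rle_trans; [|apply ln_atanh_low; lra]. lra.
Qed.

Lemma fin_step (a l2 L2 q Qv S kk : R) : 0 < S -> 0 <= kk -> l2 <= L2/S -> a <= 2*q -> q <= Qv/S ->
  kk*l2 + a <= (kk*L2 + 2*Qv)/S.
Proof.
  intros HS Hk H1 H2 H3.
  assert (kk * l2 <= kk * (L2/S)) by (apply Rmult_le_compat_l; auto).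
  replace ((kk*L2 + 2*Qv)/S) with (kk * (L2/S) + 2 * (Qv/S)) by (field; lra). lra.
Qed.

Lemma lnU_correct (m : Z) : (1 <= m)%Z -> ln (IZR m) <= IZR (lnU m) / IZR Sc.
Proof.
  intros Hm. unfold lnU; cbv zeta.
  set (k := Z.log2 m). set (pk := (2 ^ k)%Z).
  pose proof (Z.log2_spec m ltac:(lia)) as [K1 K2]. fold k pk in K1, K2.
  assert (Hk : (0 <= k)%Z) by apply Z.log2_nonneg.
  rewrite Z.pow_succ_r in K2 by auto. fold pk in K2.
  assert (Hpk : (0 < pk)%Z) by lia.
  assert (Ipk : IZR pk = 2 ^ (Z.to_nat k)).
  { rewrite pow_IZR. f_equal. unfold pk. f_equal. lia. }
  assert (R1 : 0 < IZR pk) by (apply IZR_lt; lia).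
  assert (R2 : IZR pk <= IZR m) by (apply IZR_le; lia).
  assert (R3 : IZR m < 2 * IZR pk) by (rewrite <- mult_IZR; apply IZR_lt; lia).
  set (z := (IZR m - IZR pk) / (IZR m + IZR pk)).
  assert (Hz : 0 <= z < 1).
  { unfold z. split. apply Rdiv_le_0_compat; lra.
    apply Rmult_lt_reg_r with (IZR m + IZR pk); [lra|]. field_simplify; lra. }
  assert (Z3 : (1 + z) / (1 - z) = IZR m / IZR pk).
  { unfold z. field. split; lra. }
  assert (Ez : ln (IZR m) = INR (Z.to_nat k) * ln 2 + (ln (1 + z) - ln (1 - z))).
  { rewrite <- ln_div by lra. rewrite Z3. rewrite ln_div by lra.
    rewrite Ipk, ln_pow by lra. ring. }
  rewrite Ez.
  pose proof (ln_atanh_up z Hz) as A1.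
  pose proof (QzU_at (m - pk) (m + pk) z ltac:(lia) ltac:(lia)) as A2.
  rewrite minus_IZR, plus_IZR in A2. specialize (A2 eq_refl).
  assert (3 * IZR (m - pk) <= IZR (m + pk)) by (rewrite <- mult_IZR; apply IZR_le; lia).
  rewrite minus_IZR, plus_IZR in H.
  assert (Hq : (IZR m - IZR pk) / (IZR m + IZR pk) + 1 / IZR Sc <= 1/2).
  { rewrite IZR_Sc. apply Rle_trans with (1/3 + 1/4294967296); [|lra].
    apply Rplus_le_compat_r. apply Rmult_le_reg_r with (IZR m + IZR pk); [lra|].
    field_simplify; lra. }
  specialize (A2 Hq).
  pose proof ln2_le as A3.
  assert (Ik : INR (Z.to_nat k) = IZR k) by (rewrite INR_IZR_INZ; f_equal; lia).
  rewrite Ik.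
  assert (0 <= IZR k) by (apply IZR_le; auto).
  rewrite plus_IZR, !mult_IZR.
  apply fin_step with (q := Qz z); auto.
  rewrite IZR_Sc; lra.
Qed.


Lemma e_check : (2 * QzU (cdiv (17 * Sc) 37) <= Sc)%Z.
Proof. apply Z.leb_le. vm_compute. reflexivity. Qed.

Lemma e_from (l q v S : R) : l <= 2*q -> q <= v/S -> 2*v <= S -> 0 < S -> l <= 1.
Proof.
  intros H1 H2 H3 H4. assert (v/S <= 1/2).
  { apply Rmult_le_reg_r with S; [lra|]. field_simplify; lra. }
  lra.
Qed.

Lemma e_ge : 27/10 <= exp 1.
Proof.
  assert (H : ln (27/10) <= 1).
  { replace (27/10) with ((1 + 17/37) / (1 - 17/37)) by field.
    rewrite ln_div by lra.
    apply (e_from _ (Qz (17/37)) (IZR (QzU (cdiv (17 * Sc) 37))) (IZR Sc)).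
    - apply ln_atanh_up; lra.
    - apply QzU_at; try lia. field. rewrite IZR_Sc; lra.
    - rewrite <- mult_IZR. apply IZR_le. apply e_check.
    - rewrite IZR_Sc; lra. }
  rewrite <- (exp_ln (27/10)) by lra.
  destruct (Rle_lt_or_eq_dec _ _ H). left. apply exp_increasing; auto. rewrite e. lra.
Qed.

Lemma c2_gen (l Lr S A D c : R) : 0 <= l -> l <= Lr / S -> 0 < S -> 0 < A -> 0 < D ->
  (Lr*Lr*D)/(S*S*A) <= c -> l^2/A <= c / D.
Proof.
  intros H0 H1 HS HA HD H2.
  assert (l^2 <= (Lr/S)^2) by (apply pow_incr; lra).
  apply Rle_trans with ((Lr/S)^2/A).
  - unfold Rdiv at 1 3. apply Rmult_le_compat_r; auto. left; apply Rinv_0_lt_compat; auto.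
  - replace ((Lr/S)^2/A) with ((Lr*Lr*D)/(S*S*A) / D) by (field; lra).
    unfold Rdiv at 1 3. apply Rmult_le_compat_r; auto. left; apply Rinv_0_lt_compat; auto.
Qed.

Lemma k_gen (l Lr S A D B c : R) : 0 <= l -> l <= Lr / S -> 0 < S -> 0 < A -> 0 < D -> 0 <= B ->
  (Lr*Lr*Lr*Lr*B*D)/(S*S*S*S*24*A*A) <= c -> l^4 * (B/(24*A^2)) <= c / D.
Proof.
  intros H0 H1 HS HA HD HB H2.
  assert (l^4 <= (Lr/S)^4) by (apply pow_incr; lra).
  apply Rle_trans with ((Lr/S)^4 * (B/(24*A^2))).
  - apply Rmult_le_compat_r; auto. apply Rdiv_le_0_compat; auto. nra.
  - replace ((Lr/S)^4 * (B/(24*A^2))) with ((Lr*Lr*Lr*Lr*B*D)/(S*S*S*S*24*A*A) / D) by (field; lra).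
    unfold Rdiv at 1 3. apply Rmult_le_compat_r; auto. left; apply Rinv_0_lt_compat; auto.
Qed.

Lemma IZR_Dz : IZR Dz = 100000000.
Proof. unfold Dz. reflexivity. Qed.

Lemma c2_term_nonneg n : 0 <= c2_term n.
Proof.
  unfold c2_term. destruct (is_primeb n) eqn:Hp; [|lra].
  pose proof (primeb_ge2 n Hp).
  assert (2 <= INR n) by (apply (le_INR 2); auto).
  apply Rdiv_le_0_compat; nra.
Qed.

Lemma kterm_nonneg n : 0 <= kterm n.
Proof.
  unfold kterm. destruct (is_primeb n) eqn:Hp; [|lra].
  pose proof (primeb_ge2 n Hp).
  assert (2 <= INR n) by (apply (le_INR 2); auto). unfold Ap.
  apply Rmult_le_pos. replace (lp n ^4) with ((lp n^2)^2) by ring. apply pow2_ge_0.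
  assert (0 < (INR n - 1)^2) by nra.
  assert (0 < ((INR n - 1)^2)^2) by (apply pow_lt; lra).
  apply Rplus_le_le_0_compat; apply Rdiv_le_0_compat; lra.
Qed.

Lemma term_bounds n :
  c2_term n <= IZR (c2z (Z.of_nat n)) / IZR Dz /\ kterm n <= IZR (kz (Z.of_nat n)) / IZR Dz.
Proof.
  pose proof IZR_Sc as HS. pose proof IZR_Dz as HD.
  assert (HSc : 0 < IZR Sc) by lra. assert (HDz : 0 < IZR Dz) by lra.
  unfold c2z, kz, both.
  set (m := Z.of_nat n).
  assert (Em : INR n = IZR m) by apply INR_IZR_INZ.
  destruct (ptest m) eqn:Ep.
  - apply ptest_ge2 in Ep.
    assert (Hm2 : 2 <= IZR m) by (apply IZR_le; auto).
    assert (Hpos : (0 < (m - 1) * (m - 1))%Z) by nia.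
    assert (HA : 0 < (IZR m - 1)^2) by nra.
    pose proof (lnU_correct m ltac:(lia)) as HL.
    assert (Hl0 : 0 <= ln (IZR m)).
    { rewrite <- ln_1. apply ln_le; lra. }
    simpl fst; simpl snd.
    pose proof (cdiv_ge (lnU m * lnU m * Dz) (Sc * Sc * ((m - 1) * (m - 1))) ltac:(pose proof Sc_pos; nia)) as C1.
    pose proof (cdiv_ge (lnU m * lnU m * lnU m * lnU m * (2 * ((m - 1) * (m - 1)) + 24 * m - 12) * Dz)
       (Sc * Sc * Sc * Sc * 24 * ((m - 1) * (m - 1)) * ((m - 1) * (m - 1))) ltac:(pose proof Sc_pos; nia)) as C2.
    rewrite !mult_IZR, !minus_IZR in C1. repeat rewrite ?mult_IZR, ?minus_IZR, ?plus_IZR in C2.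
    split.
    + unfold c2_term. destruct (is_primeb n).
      * rewrite Em. replace ((IZR m - 1) * (IZR m - 1)) with ((IZR m - 1)^2) in C1 by ring.
        apply (c2_gen _ (IZR (lnU m)) (IZR Sc)); auto.
      * apply Rdiv_le_0_compat; auto. eapply Rle_trans; [|exact C1].
        apply Rdiv_le_0_compat. assert (0 <= IZR (lnU m) * IZR (lnU m)) by nra. nra. nra.
    + assert (HB : 0 <= 2 * ((IZR m - 1) * (IZR m - 1)) + 24 * IZR m - 12) by nra.
      unfold kterm. destruct (is_primeb n).
      * unfold lp, Ap. rewrite Em.
        replace (1 / (12 * (IZR m - 1) ^ 2) + (IZR m - 1 / 2) / ((IZR m - 1) ^ 2) ^ 2)
          with ((2 * ((IZR m - 1) * (IZR m - 1)) + 24 * IZR m - 12) / (24 * ((IZR m - 1)^2)^2))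
          by (field; lra).
        replace (((IZR m - 1)^2)^2) with (((IZR m - 1) * (IZR m - 1))^2) by ring.
        apply (k_gen _ (IZR (lnU m)) (IZR Sc)); auto. nra.
      * apply Rdiv_le_0_compat; auto. eapply Rle_trans; [|exact C2].
        apply Rdiv_le_0_compat.
        assert (0 <= IZR (lnU m) * IZR (lnU m)) by nra.
        assert (0 <= IZR (lnU m) * IZR (lnU m) * IZR (lnU m) * IZR (lnU m)) by nra.
        apply Rmult_le_pos; [apply Rmult_le_pos|]; lra.
        assert (0 < (IZR m - 1) * (IZR m - 1)) by nra.
        assert (0 < IZR Sc * IZR Sc * IZR Sc * IZR Sc * 24) by (rewrite HS; lra).
        apply Rmult_lt_0_compat; [apply Rmult_lt_0_compat|]; lra.
  - assert (Hnp : is_primeb n = false).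
    { destruct (is_primeb n) eqn:E; auto. apply primeb_prime, ptest_sound in E. fold m in E. congruence. }
    unfold c2_term, kterm. rewrite Hnp. simpl. unfold Rdiv. rewrite Rmult_0_l. lra.
Qed.

Definition C4 : R := 4096 / (27/10)^4.

Lemma ln4_le x : 1 <= x -> (ln x)^4 <= C4 * sqrt x.
Proof.
  intros Hx.
  set (y := sqrt (sqrt (sqrt x))).
  assert (Hs1 : 1 <= sqrt x) by (rewrite <- sqrt_1; apply sqrt_le_1_alt; lra).
  assert (Hs2 : 1 <= sqrt (sqrt x)) by (rewrite <- sqrt_1; apply sqrt_le_1_alt; lra).
  assert (Hy : 1 <= y) by (unfold y; rewrite <- sqrt_1; apply sqrt_le_1_alt; lra).
  assert (Hy2 : y^2 = sqrt (sqrt x)) by (unfold y; rewrite <- Rsqr_pow2; apply Rsqr_sqrt; lra).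
  assert (Hy4 : y^4 = sqrt x).
  { replace (y^4) with ((y^2)^2) by ring. rewrite Hy2. rewrite <- Rsqr_pow2; apply Rsqr_sqrt; lra. }
  assert (Hy8 : y^8 = x).
  { replace (y^8) with ((y^4)^2) by ring. rewrite Hy4. rewrite <- Rsqr_pow2; apply Rsqr_sqrt; lra. }
  assert (Hl : ln x = 8 * ln y).
  { rewrite <- Hy8. rewrite ln_pow by lra. simpl. ring. }
  assert (Hly0 : 0 <= ln y) by (rewrite <- ln_1; apply ln_le; lra).
  assert (Hly : ln y <= y / (27/10)).
  { pose proof (exp_ineq1_le (ln y - 1)) as E.
    unfold Rminus in E. rewrite exp_plus, exp_ln, exp_Ropp in E by lra.
    pose proof e_ge.
    assert (y * / exp 1 <= y / (27/10)).
    { unfold Rdiv. apply Rmult_le_compat_l. lra. apply Rinv_le_contravar; lra. }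
    lra. }
  rewrite Hl. unfold C4. rewrite <- Hy4.
  assert ((ln y)^4 <= (y / (27/10))^4) by (apply pow_incr; lra).
  replace ((8 * ln y)^4) with (4096 * (ln y)^4) by ring.
  replace (4096 / (27/10)^4 * y^4) with (4096 * (y / (27/10))^4) by (field; lra).
  lra.
Qed.

Lemma tele (m : R) : 10000 <= m ->
  sqrt (m + 1) / m^2 <= 2 * (1 + 1/20000) * (/ sqrt (m - 1) - / sqrt m).
Proof.
  intros Hm.
  set (r := sqrt (m - 1)). set (s := sqrt m). set (q := sqrt (m + 1)).
  assert (Hr : r * r = m - 1) by (unfold r; apply sqrt_sqrt; lra).
  assert (Hs : s * s = m) by (unfold s; apply sqrt_sqrt; lra).
  assert (Hq : q * q = m + 1) by (unfold q; apply sqrt_sqrt; lra).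
  assert (Hr0 : 0 < r) by (unfold r; apply sqrt_lt_R0; lra).
  assert (Hs0 : 0 < s) by (unfold s; apply sqrt_lt_R0; lra).
  assert (Hq0 : 0 < q) by (unfold q; apply sqrt_lt_R0; lra).
  assert (Hrs : r <= s) by (unfold r, s; apply sqrt_le_1_alt; lra).
  assert (Hd : / r - / s = / (r * s * (r + s))).
  { assert (E : (s - r) * (r + s) = 1) by (replace ((s - r) * (r + s)) with (s*s - r*r) by ring; lra).
    replace (/ r - / s) with ((s - r) * (r + s) / (r * s * (r + s))) by (field; lra).
    rewrite E. unfold Rdiv. ring. }
  rewrite Hd.
  assert (Hqs : q * s <= (1 + 1/20000) * m).
  { assert (E : (q*s)*(q*s) = (m+1)*m) by (replace ((q*s)*(q*s)) with ((q*q)*(s*s)) by ring; rewrite Hq, Hs; ring).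
    assert (E2 : (q*s)*(q*s) <= ((1 + 1/20000) * m) * ((1 + 1/20000) * m)) by nra.
    destruct (Rle_dec (q*s) ((1 + 1/20000) * m)); auto.
    exfalso. assert (0 < q * s) by nra. nra. }
  assert (Hden : 0 < r * s * (r + s)) by (apply Rmult_lt_0_compat; nra).
  assert (Hm2 : 0 < m^2) by nra.
  apply Rmult_le_reg_r with (m^2 * (r * s * (r + s))). nra.
  replace (q / m^2 * (m^2 * (r * s * (r + s)))) with (q * (r * s * (r + s))) by (field; lra).
  replace (2 * (1 + 1/20000) * / (r * s * (r + s)) * (m^2 * (r * s * (r + s)))) with (2 * (1 + 1/20000) * m^2) by (field; lra).
  assert (r * s * (r + s) <= 2 * s * m) by nra.
  assert (q * (r * s * (r + s)) <= q * (2 * s * m)) by (apply Rmult_le_compat_l; lra).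
  nra.
Qed.

Definition gsq (k : nat) : R := / sqrt (INR k - 1).
Definition lam : R := 13 * (56/81).
Definition Tc : R := C4 / lam^2 * (2 * (1 + 1/20000)).
Definition K0 : R := 1/12 + (10000 + 1/2)/10000^2.
Definition Tk : R := C4 * K0 * (2 * (1 + 1/20000)).

Lemma C4_pos : 0 < C4.
Proof. unfold C4. apply Rdiv_lt_0_compat; [lra| apply pow_lt; lra]. Qed.

Lemma big_Z n : (10000 < n)%nat -> (10000 < Z.of_nat n)%Z.
Proof. intros H. apply Nat2Z.inj_lt in H. exact H. Qed.

Lemma big_INR n : (10000 < n)%nat -> 10001 <= INR n.
Proof. intros H. apply big_Z in H. rewrite INR_IZR_INZ. apply IZR_le. lia. Qed.

Lemma pred_INR n : (10000 < n)%nat -> INR (pred n) = INR n - 1.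
Proof. intros H. apply big_Z in H. destruct n; [simpl in H; lia|]. simpl pred. rewrite S_INR. ring. Qed.

Lemma gsq_decr n : (10000 < n)%nat -> 0 <= gsq (pred n) - gsq n /\ 0 <= gsq n.
Proof.
  intros Hn. unfold gsq.
  rewrite pred_INR by auto.
  pose proof (big_INR n Hn).
  assert (0 < sqrt (INR n - 1 - 1)) by (apply sqrt_lt_R0; lra).
  assert (sqrt (INR n - 1 - 1) <= sqrt (INR n - 1)) by (apply sqrt_le_1_alt; lra).
  split.
  - assert (/ sqrt (INR n - 1) <= / sqrt (INR n - 1 - 1)) by (apply Rinv_le_contravar; lra). lra.
  - left. apply Rinv_0_lt_compat. apply sqrt_lt_R0; lra.
Qed.

Lemma tail_common n : (10000 < n)%nat -> is_primeb n = true ->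
  let x := INR n in let l := ln x in
  0 < lam <= l /\ l^4 <= C4 * sqrt x /\
  sqrt x / (x - 1)^2 <= 2 * (1 + 1/20000) * (gsq (pred n) - gsq n) /\ 10000 <= x - 1.
Proof.
  intros Hn Hp x l.
  assert (Hx : 10001 <= x) by (apply big_INR; auto).
  assert (HI : INR (pred n) = x - 1) by (apply pred_INR; auto).
  split; [|split; [|split]].
  - split. unfold lam; lra.
    unfold lam, l. pose proof ln2_ge.
    assert (ln (2^13) <= ln x) by (apply ln_le; [apply pow_lt; lra| simpl; lra]).
    rewrite ln_pow in H0 by lra. replace (INR 13) with 13 in H0 by (simpl; ring). nra.
  - apply ln4_le. lra.
  - unfold gsq. rewrite HI.
    pose proof (tele (x - 1) ltac:(lra)) as T.
    replace (x - 1 + 1) with x in T by ring. exact T.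
  - lra.
Qed.

Lemma tail_c2 n : (10000 < n)%nat -> c2_term n <= Tc * (gsq (pred n) - gsq n).
Proof.
  intros Hn. pose proof (gsq_decr n Hn) as [G1 G2].
  assert (HTc : 0 <= Tc).
  { unfold Tc. pose proof C4_pos. apply Rmult_le_pos; [|lra].
    apply Rdiv_le_0_compat; [lra|]. apply pow_lt. unfold lam; lra. }
  unfold c2_term. destruct (is_primeb n) eqn:Hp; [|apply Rmult_le_pos; auto].
  destruct (tail_common n Hn Hp) as [[L0 L1] [L2 [L3 L4]]].
  set (x := INR n) in *. set (l := ln x) in *.
  assert (Hsx : 0 <= sqrt x) by apply sqrt_pos.
  assert (Hl2 : l^2 <= C4 * sqrt x / lam^2).
  { assert (lam^2 <= l^2) by (apply pow_incr; lra).
    assert (0 < lam^2) by (apply pow_lt; lra).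
    apply Rmult_le_reg_r with (lam^2); auto.
    replace (C4 * sqrt x / lam ^ 2 * lam ^ 2) with (C4 * sqrt x) by (field; lra).
    replace (l^4) with (l^2 * l^2) in L2 by ring.
    assert (0 <= l^2) by nra. nra. }
  assert (HA : 0 < (x - 1)^2) by nra.
  apply Rle_trans with (C4 / lam^2 * (sqrt x / (x - 1)^2)).
  - replace (C4 / lam^2 * (sqrt x / (x - 1)^2)) with ((C4 * sqrt x / lam^2) / (x-1)^2) by (field; split; lra).
    unfold Rdiv at 1 2. apply Rmult_le_compat_r; [left; apply Rinv_0_lt_compat; auto| auto].
  - unfold Tc. rewrite Rmult_assoc. apply Rmult_le_compat_l; auto.
    apply Rdiv_le_0_compat; [pose proof C4_pos; lra| apply pow_lt; lra].
Qed.

Lemma tail_k n : (10000 < n)%nat -> kterm n <= Tk * (gsq (pred n) - gsq n).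
Proof.
  intros Hn. pose proof (gsq_decr n Hn) as [G1 G2].
  assert (HK0 : 0 < K0) by (unfold K0; lra).
  assert (HTk : 0 <= Tk).
  { unfold Tk. pose proof C4_pos. apply Rmult_le_pos; [|lra]. nra. }
  unfold kterm. destruct (is_primeb n) eqn:Hp; [|apply Rmult_le_pos; auto].
  destruct (tail_common n Hn Hp) as [[L0 L1] [L2 [L3 L4]]].
  unfold lp, Ap. set (x := INR n) in *. set (l := ln x) in *.
  assert (Hsx : 0 <= sqrt x) by apply sqrt_pos.
  assert (HA : 0 < (x - 1)^2) by nra.
  assert (Hfac : 1 / (12 * (x - 1)^2) + (x - 1/2) / ((x - 1)^2)^2 <= K0 / (x - 1)^2).
  { unfold K0. set (m := x - 1) in *.
    replace (x - 1/2) with (m + 1/2) by (unfold m; field).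
    replace (1 / (12 * m^2) + (m + 1/2)/(m^2)^2) with ((1/12 + (m + 1/2)/m^2) / m^2) by (field; lra).
    unfold Rdiv at 1 3. apply Rmult_le_compat_r; [left; apply Rinv_0_lt_compat; auto|].
    apply Rplus_le_compat_l.
    apply Rmult_le_reg_r with (m^2 * 10000^2); [nra|].
    field_simplify; try nra. }
  assert (0 <= l^4) by (replace (l^4) with ((l^2)^2) by ring; apply pow2_ge_0).
  apply Rle_trans with (l^4 * (K0 / (x - 1)^2)).
  - apply Rmult_le_compat_l; auto.
  - apply Rle_trans with (C4 * K0 * (sqrt x / (x - 1)^2)).
    + replace (C4 * K0 * (sqrt x / (x - 1)^2)) with ((C4 * sqrt x) * (K0 / (x - 1)^2)) by (field; lra).
      apply Rmult_le_compat_r; auto. apply Rdiv_le_0_compat; lra.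
    + replace (Tk * (gsq (pred n) - gsq n)) with (C4 * K0 * (2 * (1 + 1/20000) * (gsq (pred n) - gsq n))) by (unfold Tk; ring).
      apply Rmult_le_compat_l; auto.
      pose proof C4_pos. nra.
Qed.

Lemma exp_mono x y : x <= y -> exp x <= exp y.
Proof. intros H. destruct (Rle_lt_or_eq_dec _ _ H). left; apply exp_increasing; auto. subst; lra. Qed.

Lemma sum_le_upto (f g : nat -> R) P : (forall n, (n <= P)%nat -> f n <= g n) ->
  sum_f_R0 f P <= sum_f_R0 g P.
Proof.
  induction P; intros H; simpl. apply H; lia.
  apply Rplus_le_compat. apply IHP. intros; apply H; lia. apply H; lia.
Qed.

Lemma sum_mono (f : nat -> R) : (forall n, 0 <= f n) -> forall N M, (N <= M)%nat ->
  sum_f_R0 f N <= sum_f_R0 f M.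
Proof.
  intros Hf N M H. induction H. lra. simpl. specialize (Hf (S m)). lra.
Qed.

Lemma split_sum (f g h : nat -> R) (T : R) (P : nat) :
  (forall n, 0 <= f n) -> (forall n, (n <= P)%nat -> f n <= g n) ->
  (forall n, (P < n)%nat -> f n <= T * (h (pred n) - h n)) ->
  (forall n, (P <= n)%nat -> 0 <= h n) -> 0 <= T ->
  forall N, sum_f_R0 f N <= sum_f_R0 g P + T * h P.
Proof.
  intros Hf Hfg Ht Hh HT N.
  assert (Hbase : sum_f_R0 f P <= sum_f_R0 g P) by (apply sum_le_upto; auto).
  assert (A : forall k, sum_f_R0 f (P + k)%nat <= sum_f_R0 g P + T * (h P - h (P + k)%nat)).
  { induction k.
    - rewrite Nat.add_0_r. lra.
    - replace (P + S k)%nat with (S (P + k)) by lia. simpl.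
      pose proof (Ht (S (P + k)) ltac:(lia)) as H. simpl in H. lra. }
  destruct (Nat.le_gt_cases N P) as [HN|HN].
  - pose proof (sum_mono f Hf N P HN). pose proof (Hh P (le_n P)).
    assert (0 <= T * h P) by (apply Rmult_le_pos; auto). lra.
  - replace N with (P + (N - P))%nat by lia.
    pose proof (A (N - P)%nat). pose proof (Hh (P + (N - P))%nat ltac:(lia)).
    assert (0 <= T * h (P + (N - P))%nat) by (apply Rmult_le_pos; auto). lra.
Qed.

Fixpoint sumZ (f : Z -> Z) (N : nat) : Z :=
  match N with O => f 0%Z | S k => (sumZ f k + f (Z.of_nat (S k)))%Z end.

Lemma both0 : both 0%Z = (0%Z, 0%Z).
Proof. reflexivity. Qed.

Lemma sumP_eq N : sumP N = (sumZ c2z N, sumZ kz N, Z.of_nat N).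
Proof.
  induction N as [|k IH].
  - simpl. unfold c2z, kz. rewrite both0. reflexivity.
  - change (sumP (S k)) with (let '(a, b, m) := sumP k in let '(x, y) := both (m+1)%Z in ((a + x)%Z, (b + y)%Z, (m+1)%Z)).
    rewrite IH.
    change (sumZ c2z (S k)) with (sumZ c2z k + c2z (Z.of_nat (S k)))%Z.
    change (sumZ kz (S k)) with (sumZ kz k + kz (Z.of_nat (S k)))%Z.
    replace (Z.of_nat k + 1)%Z with (Z.of_nat (S k)) by lia.
    unfold c2z, kz. destruct (both (Z.of_nat (S k))). reflexivity.
Qed.

Lemma sumZ_R (f : Z -> Z) (D : R) N :
  sum_f_R0 (fun n => IZR (f (Z.of_nat n)) / D) N = IZR (sumZ f N) / D.
Proof.
  induction N; simpl. auto. rewrite IHN, plus_IZR. unfold Rdiv. ring.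
Qed.

Lemma sumP_val : sumP 10000 = (138460893%Z, 140369293%Z, 10000%Z).
Proof. vm_compute. reflexivity. Qed.

Lemma sumc2_val : sumZ c2z 10000 = 138460893%Z.
Proof. pose proof sumP_val as H. rewrite sumP_eq in H. congruence. Qed.
Lemma sumk_val : sumZ kz 10000 = 140369293%Z.
Proof. pose proof sumP_val as H. rewrite sumP_eq in H. congruence. Qed.

Lemma gsq_P : gsq 10000 <= 1 / (999/10).
Proof.
  unfold gsq. rewrite INR_IZR_INZ. change (Z.of_nat 10000) with 10000%Z.
  replace (IZR 10000 - 1) with 9999 by (simpl; lra).
  assert (999/10 <= sqrt 9999).
  { rewrite <- (sqrt_square (999/10)) by lra. apply sqrt_le_1_alt. lra. }
  unfold Rdiv. rewrite Rmult_1_l. apply Rinv_le_contravar; lra.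
Qed.

Definition c2up : R := 138460893 / 100000000 + Tc * (1 / (999/10)).
Definition Kup : R := 140369293 / 100000000 + Tk * (1 / (999/10)).

Lemma Tc_pos : 0 <= Tc.
Proof. unfold Tc. pose proof C4_pos. apply Rmult_le_pos; [|lra].
  apply Rdiv_le_0_compat; [lra|]. apply pow_lt. unfold lam; lra. Qed.
Lemma Tk_pos : 0 <= Tk.
Proof. unfold Tk, K0. pose proof C4_pos. apply Rmult_le_pos; [|lra]. apply Rmult_le_pos; lra. Qed.

Lemma gsq_nonneg n : (10000 <= n)%nat -> 0 <= gsq n.
Proof.
  intros H. unfold gsq. apply Rlt_le, Rinv_0_lt_compat, sqrt_lt_R0.
  apply Nat2Z.inj_le in H. change (Z.of_nat 10000) with 10000%Z in H.
  rewrite INR_IZR_INZ. assert (10000 <= IZR (Z.of_nat n)) by (apply IZR_le; lia). lra.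
Qed.

Lemma c2_partial N : sum_f_R0 c2_term N <= c2up.
Proof.
  eapply Rle_trans.
  - apply (split_sum c2_term (fun n => IZR (c2z (Z.of_nat n)) / IZR Dz) gsq Tc 10000).
    + apply c2_term_nonneg.
    + intros n _. apply term_bounds.
    + apply tail_c2.
    + apply gsq_nonneg.
    + apply Tc_pos.
  - rewrite sumZ_R, sumc2_val, IZR_Dz. unfold c2up.
    apply Rplus_le_compat. right. reflexivity.
    apply Rmult_le_compat_l. apply Tc_pos. apply gsq_P.
Qed.

Lemma k_partial N : sum_f_R0 kterm N <= Kup.
Proof.
  eapply Rle_trans.
  - apply (split_sum kterm (fun n => IZR (kz (Z.of_nat n)) / IZR Dz) gsq Tk 10000).
    + apply kterm_nonneg.
    + intros n _. apply term_bounds.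
    + apply tail_k.
    + apply gsq_nonneg.
    + apply Tk_pos.
  - rewrite sumZ_R, sumk_val, IZR_Dz. unfold Kup.
    apply Rplus_le_compat. right. reflexivity.
    apply Rmult_le_compat_l. apply Tk_pos. apply gsq_P.
Qed.

Lemma Tc_le : Tc <= 191/100.
Proof.
  unfold Tc, C4, lam. replace ((27/10)^4) with (531441/10000) by field.
  replace ((13 * (56/81))^2) with ((13*56)^2/81^2) by field.
  apply Rmult_le_reg_r with ((13*56)^2/81^2 * (531441/10000)); [lra|].
  field_simplify; lra.
Qed.

Lemma Tk_le : Tk <= 1287/100.
Proof.
  unfold Tk, C4, K0. replace ((27/10)^4) with (531441/10000) by field.
  replace ((10000:R)^2) with 100000000 by ring.
  apply Rmult_le_reg_r with (531441/10000); [lra|].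
  field_simplify; lra.
Qed.

Lemma consts : Kup + c2up^2/2 <= 256/100 /\ Kup <= 4 * (56/81)^2 /\ 0 <= c2up.
Proof.
  pose proof Tc_le. pose proof Tk_le. pose proof Tc_pos. pose proof Tk_pos.
  assert (Hc : c2up <= 140373/100000) by (unfold c2up; lra).
  assert (Hc0 : 0 <= c2up) by (unfold c2up; lra).
  assert (Hk : Kup <= 153253/100000) by (unfold Kup; lra).
  assert (c2up^2 <= (140373/100000)^2) by (apply pow_incr; lra).
  split; [|split]; nra.
Qed.

Lemma primeb_2 : is_primeb 2 = true.
Proof.
  unfold is_primeb. destruct (prime_dec (Z.of_nat 2)) as [H|H]; auto.
  exfalso. apply H. exact prime_2.
Qed.

Theorem lemma4 :
  ex_series c2_term /\
  forall t : R, Rabs t <= 1/2 ->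
    exists L : C,
      filterlim (fun N : nat => Hpartial t N) eventually (locally L) /\
      snd L = 0 /\
      1 - c2 * t^2 <= fst L <= 1 - c2 * t^2 + 2.56 * t^4.
Proof.
  assert (Hincr : forall n, sum_n c2_term n <= sum_n c2_term (S n)).
  { intros n. rewrite !sum_n_Reals. simpl. pose proof (c2_term_nonneg (S n)). lra. }
  assert (Hex : ex_series c2_term).
  { destruct (ex_finite_lim_seq_incr (sum_n c2_term) c2up Hincr) as [l Hl].
    { intros n. rewrite sum_n_Reals. apply c2_partial. }
    exists l. exact Hl. }
  split; auto.
  assert (Hc2 : is_lim_seq (sum_n c2_term) c2) by (apply Series_correct; auto).
  assert (Hc2' : is_lim_seq (fun N => sum_f_R0 c2_term N) c2).
  { apply is_lim_seq_ext with (sum_n c2_term); auto. intros; apply sum_n_Reals. }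
  assert (Hpart : forall N, sum_f_R0 c2_term N <= c2).
  { intros N. rewrite <- sum_n_Reals. apply is_lim_seq_incr_compare; auto. }
  assert (Hc2up : c2 <= c2up).
  { pose proof (is_lim_seq_le _ _ _ _ c2_partial Hc2' (is_lim_seq_const c2up)). simpl in H. auto. }
  assert (Hc2low : (56/81)^2 <= c2).
  { eapply Rle_trans; [|apply (Hpart 2%nat)]. simpl.
    pose proof (c2_term_nonneg 0). pose proof (c2_term_nonneg 1).
    unfold c2_term at 3. rewrite primeb_2. simpl INR.
    pose proof ln2_ge.
    replace ((1 + 1 - 1)^2) with 1 by ring. replace (1 + 1) with 2 by ring.
    assert ((56/81)^2 <= ln 2 ^2) by (apply pow_incr; lra). lra. }
  destruct consts as [K1 [K2 K3]].
  intros t Ht.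
  assert (Ht2 : 0 <= t^2 <= 1/4).
  { split. apply pow2_ge_0. rewrite <- pow2_abs. pose proof (Rabs_pos t).
    replace (1/4) with ((1/2)^2) by field. apply pow_incr. lra. }
  destruct (ex_finite_lim_seq_decr (Preal t) 0 (Preal_decr t)) as [l Hl].
  { intros n. apply Preal_bounds. }
  exists (l, 0).
  split; [|split; [reflexivity|]].
  - apply filterlim_ext with (f := fun N => (Preal t N, 0)).
    { intros N. symmetry. apply Hpartial_eq. }
    apply filterlim_locally. intros eps.
    assert (Hl' : filterlim (Preal t) eventually (locally l)) by exact Hl.
    pose proof (proj1 (@filterlim_locally nat R_UniformSpace eventually _ (Preal t) l) Hl' eps) as Hl2.
    eapply filter_imp; [|exact Hl2].
    intros N HN. split; simpl; [exact HN| apply ball_center].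
  - simpl fst. split.
    + assert (Hlow : forall N, 1 - c2 * t^2 <= Preal t N).
      { intros N. destruct (Preal_bounds t N) as [_ H1].
        assert (sum_f_R0 (at_ t) N <= t^2 * sum_f_R0 c2_term N).
        { rewrite <- sum_scal. apply sum_le_gen. intros n. apply at_props. }
        pose proof (Hpart N).
        assert (t^2 * sum_f_R0 c2_term N <= t^2 * c2) by (apply Rmult_le_compat_l; lra).
        lra. }
      pose proof (is_lim_seq_le _ _ _ _ Hlow (is_lim_seq_const _) Hl). simpl in H. auto.
    + set (w := fun N => exp (t^4 * Kup - t^2 * sum_f_R0 c2_term N)).
      assert (Hw : forall N, Preal t N <= w N).
      { intros N. eapply Rle_trans; [apply Preal_up|]. unfold w. apply exp_mono.
        assert (t^2 * sum_f_R0 c2_term N - t^4 * sum_f_R0 kterm N <=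
                sum_f_R0 (fun n => at_ t n + at_ t n ^2/2) N).
        { rewrite <- !sum_scal, <- sum_minus. apply sum_le_gen. intros n. apply at_props. }
        assert (t^4 * sum_f_R0 kterm N <= t^4 * Kup).
        { apply Rmult_le_compat_l. replace (t^4) with ((t^2)^2) by ring. apply pow2_ge_0.
          apply k_partial. }
        lra. }
      assert (Hwl : is_lim_seq w (exp (t^4 * Kup - t^2 * c2))).
      { unfold w. apply is_lim_seq_continuous.
        apply derivable_continuous_pt, derivable_pt_exp.
        apply is_lim_seq_minus'. apply is_lim_seq_const.
        apply is_lim_seq_mult'. apply is_lim_seq_const. auto. }
      pose proof (is_lim_seq_le _ _ _ _ Hw Hl Hwl) as Hle. change (l <= exp (t^4 * Kup - t^2 * c2)) in Hle.
      set (T2 := t^2) in *.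
      replace (t^4) with (T2^2) in * by (unfold T2; ring).
      set (z := T2 * c2 - T2^2 * Kup).
      assert (Hz0 : 0 <= z).
      { unfold z. replace (T2 * c2 - T2^2 * Kup) with (T2 * (c2 - T2 * Kup)) by ring.
        apply Rmult_le_pos. lra.
        assert (T2 * Kup <= 1/4 * Kup).
        { apply Rmult_le_compat_r; [|lra]. pose proof (Hpart 0%nat). simpl in H.
          eapply Rle_trans; [|apply (k_partial 0)]. simpl. apply kterm_nonneg. }
        nra. }
      assert (Hz1 : z <= T2 * c2).
      { unfold z. assert (0 <= T2^2 * Kup).
        { apply Rmult_le_pos. apply pow2_ge_0. eapply Rle_trans; [|apply (k_partial 0)]. simpl. apply kterm_nonneg. }
        lra. }
      replace (T2^2 * Kup - T2 * c2) with (- z) in Hle by (unfold z; ring).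
      pose proof (exp_up2 z Hz0) as He.
      assert (z^2 <= (T2 * c2)^2) by (apply pow_incr; lra).
      assert (0 <= c2) by nra.
      assert ((T2 * c2)^2 <= T2^2 * c2up^2).
      { replace ((T2 * c2)^2) with (T2^2 * c2^2) by ring.
        apply Rmult_le_compat_l. apply pow2_ge_0. apply pow_incr. lra. }
      assert (T2^2 * (Kup + c2up^2/2) <= T2^2 * (256/100)).
      { apply Rmult_le_compat_l. apply pow2_ge_0. lra. }
      replace 2.56 with (256/100) by lra.
      assert (Hzd : z = T2 * c2 - T2^2 * Kup) by reflexivity. clearbody z.
      assert (T2^2 * (Kup + c2up^2/2) = T2^2 * Kup + T2^2 * c2up^2 / 2) by field.
      lra.
Qed.
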